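(* Let $f_1,\dots,f_n$ be monotone linear functions and let $\sigma$ be a counterclockwise permutation for them with $f^\sigma(x)=x$ for all $x$. Then $f^\tau(x)=x$ for all $x$ and every counterclockwise permutation $\tau$ for $f_1,\dots,f_n$.
   Context: A linear function is $f(x)=ax+b$; monotone means $a>0$; identical means $f(x)=x$. $\vec f=(b,1-a)^\top$ and $\theta(f)\in[0,2\pi)$ is its polar angle ($\bot$ if $\vec f=0$). For a permutation $\sigma$ of $[n]$, $f^\sigma=f_{\sigma(n)}\circ\cdots\circ f_{\sigma(1)}$. $\sigma$ is counterclockwise if, after discarding positions $i$ with $f_{\sigma(i)}$ identical, there is $k$ such that $\theta(f_{\sigma(k)})\le\cdots\le\theta(f_{\sigma(n)})\le\theta(f_{\sigma(1)})\le\cdots\le\theta(f_{\sigma(k-1)})$. *)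

(* Defs.v *)
From mathcomp Require Import all_boot all_fingroup.
From Stdlib Require Import Reals.

Set Implicit Arguments.
Unset Strict Implicit.
Unset Printing Implicit Defensive.

Definition linfun := (R * R)%type.

Definition lf_eval (f : linfun) (x : R) : R := (f.1 * x + f.2)%R.

Definition monotone (f : linfun) : Prop := (0 < f.1)%R.

Definition identical (f : linfun) : Prop := f.1 = 1%R /\ f.2 = 0%R.

Definition lf_vec (f : linfun) : R * R := (f.2, 1 - f.1)%R.

(* Polar angle in [0, 2*PI) of a nonzero vector (x, y). *)
Definition polar_angle (v : R * R) : R :=
  let r := sqrt (v.1 * v.1 + v.2 * v.2) in
  if Rle_dec 0 v.2 then acos (v.1 / r)%R else (2 * PI - acos (v.1 / r))%R.

(* theta(f); None plays the role of bottom (vec f = 0). *)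
Definition theta (f : linfun) : option R :=
  if Req_EM_T (lf_vec f).1 0 then
    if Req_EM_T (lf_vec f).2 0 then None else Some (polar_angle (lf_vec f))
  else Some (polar_angle (lf_vec f)).

Definition Rleb (x y : R) : bool := if Rle_dec x y then true else false.

Definition perm_seq n (f : 'I_n -> linfun) (s : 'S_n) : seq linfun :=
  [seq f (s i) | i <- enum 'I_n].

(* f^sigma = f_{sigma(n)} o ... o f_{sigma(1)} : apply f_{sigma(1)} first. *)
Definition comp_perm n (f : 'I_n -> linfun) (s : 'S_n) (x : R) : R :=
  foldl (fun y g => lf_eval g y) x (perm_seq f s).

(* Counterclockwise: after discarding identical functions, the sequence of
   angles theta(f_{sigma(k)}) .. theta(f_{sigma(n)}), theta(f_{sigma(1)}) ..
   theta(f_{sigma(k-1)}) is nondecreasing for some k, i.e. some rotation of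
   the angle sequence is sorted. *)
Definition counterclockwise n (f : 'I_n -> linfun) (s : 'S_n) : Prop :=
  let angs := pmap theta (perm_seq f s) in
  exists k : nat, sorted Rleb (rot k angs).

(* Main.v *)
Require Import Defs.
From mathcomp Require Import all_boot all_fingroup.
From Stdlib Require Import Reals Lra.

Open Scope R_scope.

Lemma sq_eq (x y : R) : 0 <= x * y -> x * x = y * y -> x = y.
Proof.
move=> h1 h3.
have : (x - y) * (x + y) = 0 by nra.
case/Rmult_integral => h; first lra.
have : x = - y by lra. move=> e; subst x. have : y * y = 0 by nra. nra.
Qed.

Lemma polar_cross (v w : R * R) :
  ~ (v.1 = 0 /\ v.2 = 0) -> ~ (w.1 = 0 /\ w.2 = 0) ->
  polar_angle v = polar_angle w -> v.1 * w.2 = v.2 * w.1.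
Proof.
case: v => v1 v2; case: w => w1 w2 /= Hv Hw.
rewrite /polar_angle /=.
set r := sqrt (v1 * v1 + v2 * v2).
set r' := sqrt (w1 * w1 + w2 * w2).
have pv : 0 < v1 * v1 + v2 * v2.
  destruct (Req_dec v1 0); destruct (Req_dec v2 0); try tauto; nra.
have pw : 0 < w1 * w1 + w2 * w2.
  destruct (Req_dec w1 0); destruct (Req_dec w2 0); try tauto; nra.
have rp : 0 < r by apply: sqrt_lt_R0.
have rp' : 0 < r' by apply: sqrt_lt_R0.
have r2 : r * r = v1 * v1 + v2 * v2 by apply: sqrt_sqrt; lra.
have r2' : r' * r' = w1 * w1 + w2 * w2 by apply: sqrt_sqrt; lra.
have bnd : forall a b c, 0 < c -> c * c = a * a + b * b -> -1 <= a / c <= 1.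
  move=> a b c hc hcc.
  have : (a / c) * (a / c) <= 1.
    have -> : (a / c) * (a / c) = (a * a) / (c * c) by field; lra.
    apply Rmult_le_reg_r with (c * c); first nra.
    rewrite /Rdiv Rmult_assoc Rinv_l; nra.
  nra.
have bv := bnd _ _ _ rp r2.
have bw := bnd _ _ _ rp' r2'.
have cv := cos_acos _ bv. have cw := cos_acos _ bw.
have av := acos_bound (v1 / r). have aw := acos_bound (w1 / r').
have e1 : forall a c, 0 < c -> a / c * c = a by move=> a c hc; field; lra.
have ev := e1 v1 r rp. have ew := e1 w1 r' rp'.
destruct (Rle_dec 0 v2); destruct (Rle_dec 0 w2) => E; simpl in E.
- have U : v1 / r = w1 / r' by rewrite -cv -cw E.
  set u := v1 / r in U ev cv bv av.
  have hv1 : v1 = u * r by rewrite ev.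
  have hw1 : w1 = u * r' by rewrite U ew.
  have : (r * w2) = (r' * v2).
    have h1 : (r * w2) * (r * w2) = (r' * v2) * (r' * v2).
      have hv2 : v2 * v2 = r * r * (1 - u * u) by rewrite hv1 in r2; nra.
      have hw2 : w2 * w2 = r' * r' * (1 - u * u) by rewrite hw1 in r2'; nra.
      nra.
    apply: sq_eq h1.
    have -> : r * w2 * (r' * v2) = (r * r') * (w2 * v2) by ring.
    apply Rmult_le_pos; nra.
  move=> h. rewrite hv1 hw1. nra.
- exfalso.
  have h : acos (v1 / r) = PI /\ acos (w1 / r') = PI by lra.
  case: h => _ h. have := cw; rewrite h cos_PI => hw1.
  have : w1 = - r' by rewrite -ew -hw1; ring.
  move=> hh. have : w2 * w2 = 0 by nra. nra.
- exfalso.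
  have h : acos (v1 / r) = PI /\ acos (w1 / r') = PI by lra.
  case: h => h _. have := cv; rewrite h cos_PI => hv1.
  have : v1 = - r by rewrite -ev -hv1; ring.
  move=> hh. have : v2 * v2 = 0 by nra. nra.
- have U : v1 / r = w1 / r'.
    rewrite -cv -cw; f_equal; lra.
  set u := v1 / r in U ev cv bv av.
  have hv1 : v1 = u * r by rewrite ev.
  have hw1 : w1 = u * r' by rewrite U ew.
  have : (r * w2) = (r' * v2).
    have h1 : (r * w2) * (r * w2) = (r' * v2) * (r' * v2).
      have hv2 : v2 * v2 = r * r * (1 - u * u) by rewrite hv1 in r2; nra.
      have hw2 : w2 * w2 = r' * r' * (1 - u * u) by rewrite hw1 in r2'; nra.
      nra.
    apply: sq_eq h1.
    have -> : r * w2 * (r' * v2) = (r * r') * (w2 * v2) by ring.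
    apply Rmult_le_pos; nra.
  move=> h. rewrite hv1 hw1. nra.
Qed.

Set Implicit Arguments.
Unset Strict Implicit.
Unset Printing Implicit Defensive.

Definition cmp n (f : 'I_n -> linfun) (I : seq 'I_n) (x : R) : R :=
  foldl (fun y i => lf_eval (f i) y) x I.
Definition pf n (f : 'I_n -> linfun) (i : 'I_n) : bool := isSome (theta (f i)).
Definition thf n (f : 'I_n -> linfun) (i : 'I_n) : R := polar_angle (lf_vec (f i)).

Lemma comp_cmp n (f : 'I_n -> linfun) s x :
  comp_perm f s x = cmp f (map s (enum 'I_n)) x.
Proof.
rewrite /comp_perm /perm_seq /cmp.
elim: (enum 'I_n) x => //= i I IH x; exact: IH.
Qed.

Lemma theta_some (g : linfun) t : theta g = Some t -> t = polar_angle (lf_vec g).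
Proof.
rewrite /theta; case: Req_EM_T => h1; [case: Req_EM_T => h2 //|]; by case.
Qed.

Lemma theta_none (g : linfun) : theta g = None -> forall y, lf_eval g y = y.
Proof.
rewrite /theta; case: Req_EM_T => //= h1; case: Req_EM_T => //= h2 _ y.
rewrite /lf_eval. rewrite /lf_vec /= in h1 h2. rewrite h1. have -> : g.1 = 1 by lra. ring.
Qed.

Lemma theta_nz (g : linfun) : isSome (theta g) -> ~ ((lf_vec g).1 = 0 /\ (lf_vec g).2 = 0).
Proof.
rewrite /theta; case: Req_EM_T => h1; last by move=> _ [].
case: Req_EM_T => h2 //= _ [] _ h; exact: h2.
Qed.

Lemma pmap_eq n (f : 'I_n -> linfun) s :
  pmap theta (perm_seq f s) = map (thf f) (filter (pf f) (map s (enum 'I_n))).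
Proof.
rewrite /perm_seq. elim: (enum 'I_n) => //= i I IH.
rewrite /pf. case E: (theta (f (s i))) => [t|] /=; last exact: IH.
by rewrite IH (theta_some E).
Qed.

Lemma cmp_filter n (f : 'I_n -> linfun) I x : cmp f I x = cmp f (filter (pf f) I) x.
Proof.
rewrite /cmp. elim: I x => //= i I IH x. rewrite /pf.
case E: (theta (f i)) => [t|] /=; first exact: IH.
by rewrite (theta_none E) IH.
Qed.

Lemma cmp_aff n (f : 'I_n -> linfun) I : (forall i, monotone (f i)) ->
  exists a b, (0 < a) /\ forall x, cmp f I x = (a * x + b).
Proof.
move=> M. elim: I => [|i I [a [b [ha hx]]]].
  exists 1, 0; split; [lra|] => x /=; rewrite /cmp /=; ring.
exists (a * (f i).1), (a * (f i).2 + b); split.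
  have := M i; rewrite /monotone => h; nra.
move=> x. rewrite /cmp /= -/(cmp f I _) hx /lf_eval; ring.
Qed.

Lemma cmp_cat n (f : 'I_n -> linfun) I J x : cmp f (I ++ J) x = cmp f J (cmp f I x).
Proof. by rewrite /cmp foldl_cat. Qed.

Lemma cmp_rot n (f : 'I_n -> linfun) I k : (forall i, monotone (f i)) ->
  (forall x, cmp f I x = x) -> forall x, cmp f (rot k I) x = x.
Proof.
move=> M H. rewrite /rot.
have {}H : forall x, cmp f (drop k I) (cmp f (take k I) x) = x.
  by move=> x; rewrite -cmp_cat cat_take_drop H.
have [a [b [ha hx]]] := cmp_aff (take k I) M.
move=> y. rewrite cmp_cat.
have -> : y = cmp f (take k I) ((y - b) / a) by rewrite hx; field; lra.
by rewrite H.
Qed.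

Lemma comm_eq n (f : 'I_n -> linfun) i j : pf f i -> pf f j -> thf f i = thf f j ->
  forall y, lf_eval (f i) (lf_eval (f j) y) = lf_eval (f j) (lf_eval (f i) y).
Proof.
move=> pi pj e y.
have := @polar_cross _ _ (theta_nz pi) (theta_nz pj) e.
rewrite /lf_vec /lf_eval /= => h. nra.
Qed.

Lemma cmp_move n (f : 'I_n -> linfun) x A y :
  (forall a, a \in A -> forall z, lf_eval (f x) (lf_eval (f a) z) = lf_eval (f a) (lf_eval (f x) z)) ->
  cmp f A (lf_eval (f x) y) = lf_eval (f x) (cmp f A y).
Proof.
rewrite /cmp. elim: A y => //= a A IH y H.
rewrite -H ?mem_head // IH // => b hb; apply: H; by rewrite in_cons hb orbT.
Qed.

Definition rl n (f : 'I_n -> linfun) := fun i j => Rleb (thf f i) (thf f j).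

Lemma Rleb_P x y : Rleb x y -> (x <= y).
Proof. by rewrite /Rleb; case: Rle_dec. Qed.

Lemma cmp_sorted n (f : 'I_n -> linfun) R1 : forall R2,
  all (pf f) R1 -> perm_eq R1 R2 -> pairwise (rl f) R1 -> pairwise (rl f) R2 ->
  forall y, cmp f R1 y = cmp f R2 y.
Proof.
elim: R1 => [|x R1 IH] R2 hp hperm hs1 hs2 y.
  by move/perm_size: hperm; clear hs2; case: R2.
have xin : x \in R2 by rewrite -(perm_mem hperm) mem_head.
case/splitPr: xin hperm hs2 => A B hperm hs2.
have hperm' : perm_eq R1 (A ++ B).
  by rewrite -(perm_cons x); apply: (perm_trans hperm); by rewrite -[x :: B]cat1s perm_catCA.
move: hs1; rewrite pairwise_cons => /andP [hx1 hs1].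
move: hs2; rewrite pairwise_cat pairwise_cons => /and3P [hAl hA /andP [hxB hB]].
move: hp => /= /andP [px hp].
have eqk : forall a, a \in A -> thf f a = thf f x.
  move=> a ha. apply: Rle_antisym.
  - move/allrelP: hAl => /(_ a x ha (mem_head _ _)). exact: Rleb_P.
  - have : a \in R1 by rewrite (perm_mem hperm') mem_cat ha.
    move=> aR. move/allP: hx1 => /(_ a aR). exact: Rleb_P.
have pA : forall a, a \in A -> pf f a.
  move=> a ha. have : a \in R1 by rewrite (perm_mem hperm') mem_cat ha.
  by move/allP: hp => /(_ a).
rewrite /= -/(cmp f R1 _) (IH (A ++ B)) //; last first.
  rewrite pairwise_cat hA hB !andbT. apply/allrelP => a b ha hb.
  by move/allrelP: hAl => /(_ a b ha); apply; rewrite in_cons hb orbT.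
rewrite !cmp_cat cmp_move //= => a ha z. symmetry.
apply: comm_eq => //; [exact: pA | exact: eqk].
Qed.


Lemma perm_maps n (s t : 'S_n) : perm_eq (map s (enum 'I_n)) (map t (enum 'I_n)).
Proof.
have P : forall u : 'S_n, perm_eq (map u (enum 'I_n)) (enum 'I_n).
  move=> u. apply: uniq_perm.
  - by rewrite map_inj_uniq ?enum_uniq //; exact: perm_inj.
  - exact: enum_uniq.
  - move=> j; rewrite mem_enum; apply/mapP; exists (u^-1 j)%g; by rewrite ?mem_enum ?permKV.
by rewrite (perm_trans (P s)) // perm_sym.
Qed.

Lemma rl_trans n (f : 'I_n -> linfun) : transitive (rl f).
Proof.
move=> j i k; rewrite /rl /Rleb.
case: Rle_dec => // h1; case: Rle_dec => // h2 _ _; case: Rle_dec => // h3; lra.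
Qed.

Theorem mainTheorem9 (n : nat) (f : 'I_n -> linfun) (sigma : 'S_n) :
  (forall i, monotone (f i)) ->
  counterclockwise f sigma ->
  (forall x : R, comp_perm f sigma x = x) ->
  forall tau : 'S_n, counterclockwise f tau ->
  forall x : R, comp_perm f tau x = x.
Proof.
move=> M [k Hk] H tau [k' Hk'].
rewrite /= pmap_eq -map_rot sorted_map in Hk.
rewrite /= pmap_eq -map_rot sorted_map in Hk'.
set Ls := filter (pf f) (map sigma (enum 'I_n)) in Hk.
set Lt := filter (pf f) (map tau (enum 'I_n)) in Hk'.
have Hid : forall x, cmp f Ls x = x by move=> x; rewrite -cmp_filter -comp_cmp.
have H1 := cmp_rot k M Hid.
have E : forall y, cmp f (rot k Ls) y = cmp f (rot k' Lt) y.
  apply: cmp_sorted.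
  - have hr : perm_eq (rot k Ls) Ls by rewrite perm_rot. rewrite (perm_all _ hr). exact: filter_all.
  - rewrite perm_rot perm_sym perm_rot perm_sym. apply: perm_filter. exact: perm_maps.
  - by rewrite -sorted_pairwise //; exact: rl_trans.
  - by rewrite -sorted_pairwise //; exact: rl_trans.
move=> x. rewrite comp_cmp cmp_filter -/Lt -(rotK k' Lt).
apply: cmp_rot => // y. by rewrite -E H1.
Qed.
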